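(* Under the standing assumptions, if $a<0$ then $z(\theta)$ is negative and strictly increasing on $(\pi/2,\pi)$.
   Context: Standing assumptions: $a,b\in\mathbb{R}$ with $b>0$, $1+a+b>0$, $9-27a+b>0$, $2-8a+8a^2+ab\ne0$, $b+1-a\ne0$. Let $f^*(\zeta,\theta)=(\zeta+2\cos\theta)(2\zeta\cos\theta+1)+b\zeta-a(\zeta+2\cos\theta)^3$. Under these assumptions, for each $\theta\in(\pi/2,\pi)$ the polynomial $f^*(\cdot,\theta)$ has exactly one real zero in $(-1,1)$; denote it $w(\theta)$ (so $\zeta(\theta)=1/w(\theta)$). Define $\tau(\theta)=-w(\theta)-2\cos\theta$ and $z(\theta)=-\dfrac{w(\theta)}{\tau(\theta)^3}$ (i.e. $z=-1/(\zeta\tau^3)$). *)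

(* Defs.v *)
From Stdlib Require Import Reals Lra.
Open Scope R_scope.

Definition fstar (a b zeta theta : R) : R :=
  (zeta + 2 * cos theta) * (2 * zeta * cos theta + 1) + b * zeta
  - a * (zeta + 2 * cos theta) ^ 3.

Definition standing (a b : R) : Prop :=
  b > 0 /\ 1 + a + b > 0 /\ 9 - 27 * a + b > 0 /\
  2 - 8 * a + 8 * a ^ 2 + a * b <> 0 /\ b + 1 - a <> 0.

Definition tau_of (w : R -> R) (theta : R) : R := - w theta - 2 * cos theta.

Definition z_of (w : R -> R) (theta : R) : R := - w theta / (tau_of w theta) ^ 3.

(* Main.v *)
Require Import Defs.
From Stdlib Require Import Reals Lra Psatz.
Open Scope R_scope.

Definition G (a b t w : R) := t*w^2 + (t^2+b)*w + a*t^3 - t.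

Lemma signs (a b c w : R) : b > 0 -> a < 0 -> -1 < c < 0 -> -1 < w < 1 ->
  (w + 2*c)*(2*w*c+1) + b*w - a*(w+2*c)^3 = 0 ->
  0 < w /\ 0 < -w - 2*c /\ G a b (-w-2*c) w = 0.
Proof.
  intros Hb Ha Hc Hw E.
  assert (Hg : G a b (-w-2*c) w = 0) by (unfold G; rewrite <- E; ring).
  assert (Hw0 : 0 < w).
  { destruct (Rtotal_order w 0) as [Hl|[He|Hg']].
    - destruct (Rtotal_order (w+2*c) 0) as [H1|[H1|H1]].
      + exfalso.
        assert (0 < 2*w*c+1) by nra.
        assert ((w+2*c)*(2*w*c+1) < 0) by nra.
        assert (0 < (w+2*c)^2) by nra.
        assert ((w+2*c)^3 < 0) by (replace ((w+2*c)^3) with ((w+2*c)*(w+2*c)^2) by ring; nra).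
        nra.
      + lra.
      + lra.
    - subst. exfalso.
      assert (0 < 1 - 4*a*c^2) by nra.
      assert (2*c*(1-4*a*c^2) < 0) by nra.
      replace ((0 + 2*c)*(2*0*c+1) + b*0 - a*(0+2*c)^3) with (2*c*(1-4*a*c^2)) in E by ring.
      lra.
    - lra. }
  split; [exact Hw0|]. split; [|exact Hg].
  destruct (Rtotal_order (w+2*c) 0) as [H1|[H1|H1]]; [lra| |].
  - exfalso. assert ((w + 2*c)*(2*w*c+1) - a*(w+2*c)^3 = 0) by (rewrite H1; ring).
    assert (0 < b*w) by nra. lra.
  - exfalso.
    assert (0 < 2*w*c+1) by nra.
    assert (0 < (w+2*c)*(2*w*c+1)) by nra.
    assert (0 < (w+2*c)^3) by (apply pow_lt; lra).
    nra.
Qed.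

Lemma Smono (a b t1 t2 w1 w2 : R) : b > 0 -> a < 0 -> 0 < t2 -> t2 < t1 ->
  0 < w1 < 1 -> 0 < w2 < 1 -> G a b t1 w1 = 0 -> G a b t2 w2 = 0 ->
  w2 + t2 < w1 + t1.
Proof.
  intros Hb Ha Ht2 Ht Hw1 Hw2 E1 E2.
  destruct (Rlt_le_dec (w2+t2) (w1+t1)) as [h|h]; [exact h|exfalso].
  set (S := w2 + t2). set (w' := S - t1).
  assert (Hw' : w1 <= w') by (unfold w', S; lra).
  assert (Hw'1 : w' < 1) by (unfold w', S; lra).
  assert (A1 : G a b t1 w' - G a b t1 w1 = (w'-w1)*(t1*(w'+w1)+t1^2+b)) by (unfold G; ring).
  assert (A2 : 0 <= (w'-w1)*(t1*(w'+w1)+t1^2+b)).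
  { apply Rmult_le_pos; nra. }
  set (K := a*(t1^2+t1*t2+t2^2) - S*(t1+t2) + S^2 - b - 1).
  assert (A3 : G a b t1 w' - G a b t2 w2 = (t1 - t2)*K).
  { unfold G, K, w', S. ring. }
  assert (HK : K < 0).
  { unfold K.
    assert (S^2 - S*(t1+t2) - 1 = (S-t1)*(S-t2) - t1*t2 - 1) by ring.
    assert ((S-t1)*(S-t2) < 1).
    { assert (S - t2 = w2) by (unfold S; ring). fold w'. nra. }
    assert (0 < t1^2+t1*t2+t2^2) by nra.
    assert (a*(t1^2+t1*t2+t2^2) < 0) by nra.
    nra. }
  assert ((t1-t2)*K < 0) by nra.
  lra.
Qed.

Definition Q (a b z u : R) := z^2*u^3 - z*u^2 + (a - b*z)*u - 1.

Lemma zmono (a b t1 t2 w1 w2 : R) : b > 0 -> 0 < t1 -> t1 < t2 ->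
  0 < w1 -> 0 < w2 -> G a b t1 w1 = 0 -> G a b t2 w2 = 0 ->
  - w1 / t1^3 < - w2 / t2^3.
Proof.
  intros Hb Ht1 Ht Hw1 Hw2 E1 E2.
  set (z1 := - w1 / t1^3). set (z2 := - w2 / t2^3).
  assert (P1 : 0 < t1^3) by (apply pow_lt; lra).
  assert (P2 : 0 < t2^3) by (apply pow_lt; lra).
  assert (W1 : w1 = - z1 * t1^3) by (unfold z1; field; lra).
  assert (W2 : w2 = - z2 * t2^3) by (unfold z2; field; lra).
  assert (Z1 : z1 < 0) by (unfold z1, Rdiv; apply Ropp_lt_cancel; rewrite Ropp_0, <- Ropp_mult_distr_l, Ropp_involutive; apply Rmult_lt_0_compat; [lra| apply Rinv_0_lt_compat; lra]).
  assert (Z2 : z2 < 0) by (unfold z2, Rdiv; apply Ropp_lt_cancel; rewrite Ropp_0, <- Ropp_mult_distr_l, Ropp_involutive; apply Rmult_lt_0_compat; [lra| apply Rinv_0_lt_compat; lra]).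
  assert (Q1 : Q a b z1 (t1^2) = 0).
  { assert (G a b t1 w1 = t1 * Q a b z1 (t1^2)) by (rewrite W1; unfold G, Q; ring). nra. }
  assert (Q2 : Q a b z2 (t2^2) = 0).
  { assert (G a b t2 w2 = t2 * Q a b z2 (t2^2)) by (rewrite W2; unfold G, Q; ring). nra. }
  fold z1 z2.
  destruct (Rlt_le_dec z1 z2) as [h|h]; [exact h|exfalso].
  set (u1 := t1^2) in *. set (u2 := t2^2) in *.
  assert (U1 : 0 < u1) by (unfold u1; nra).
  assert (U : u1 < u2) by (unfold u1, u2; nra).
  assert (D : Q a b z2 u1 - Q a b z1 u1 = (z2 - z1)*((z2+z1)*u1^3 - u1^2 - b*u1)) by (unfold Q; ring).
  assert (D2 : 0 <= (z2 - z1)*((z2+z1)*u1^3 - u1^2 - b*u1)).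
  {     assert ((z2+z1)*u1^3 < 0) by (assert (0 < u1^3) by (apply pow_lt; lra); nra).
    assert (0 < u1^2 + b*u1) by nra.
    assert (z2 - z1 <= 0) by lra.
    assert ((z2+z1)*u1^3 - u1^2 - b*u1 < 0) by lra.
    nra. }
  assert (F : u2 * Q a b z2 u1 = (u1-u2)*(u2*z2^2*u1^2 + (u2^2*z2^2 - u2*z2)*u1 + 1) + u1 * Q a b z2 u2)
    by (unfold Q; ring).
  assert (0 < u2*z2^2*u1^2 + (u2^2*z2^2 - u2*z2)*u1 + 1).
  { assert (0 <= u2*z2^2*u1^2) by (assert (0 <= z2^2*u1^2) by nra; nra).
    assert (0 < (u2^2*z2^2 - u2*z2)*u1) by (apply Rmult_lt_0_compat; nra).
    lra. }
  rewrite Q2 in F.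
  assert (u2 * Q a b z2 u1 < 0) by nra.
  nra.
Qed.

Lemma cos_bounds (t : R) : PI / 2 < t < PI -> -1 < cos t < 0.
Proof.
  intros [h1 h2]. split.
  - rewrite <- cos_PI. assert (0 < PI) by exact PI_RGT_0.
    apply cos_decreasing_1; lra.
  - apply cos_lt_0; lra.
Qed.

Lemma pt (a b : R) (w : R -> R) t : b > 0 -> a < 0 ->
  (forall theta, PI / 2 < theta < PI ->
     -1 < w theta < 1 /\ fstar a b (w theta) theta = 0) ->
  PI / 2 < t < PI ->
  0 < w t /\ w t < 1 /\ 0 < tau_of w t /\ G a b (tau_of w t) (w t) = 0 /\ -1 < cos t < 0.
Proof.
  intros Hb Ha H Ht. destruct (H t Ht) as [Hw E].
  pose proof (cos_bounds t Ht) as Hc.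
  unfold fstar in E.
  destruct (signs a b (cos t) (w t) Hb Ha Hc Hw E) as [A [B C]].
  unfold tau_of. repeat split; lra || exact C || idtac.
Qed.

Theorem mainTheorem14 (a b : R) (w : R -> R) :
  standing a b ->
  (forall theta, PI / 2 < theta < PI ->
     -1 < w theta < 1 /\ fstar a b (w theta) theta = 0) ->
  a < 0 ->
  (forall theta, PI / 2 < theta < PI -> z_of w theta < 0) /\
  (forall t1 t2, PI / 2 < t1 < PI -> PI / 2 < t2 < PI -> t1 < t2 ->
     z_of w t1 < z_of w t2).
Proof.
  intros [Hb _] H Ha. split.
  - intros t Ht. destruct (pt a b w t Hb Ha H Ht) as [A [B [C [D E]]]].
    unfold z_of, Rdiv.
    assert (0 < / tau_of w t ^ 3) by (apply Rinv_0_lt_compat, pow_lt; lra).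
    nra.
  - intros t1 t2 H1 H2 H12.
    destruct (pt a b w t1 Hb Ha H H1) as [A1 [B1 [C1 [D1 E1]]]].
    destruct (pt a b w t2 Hb Ha H H2) as [A2 [B2 [C2 [D2 E2]]]].
    assert (Hc : cos t2 < cos t1).
    { assert (0 < PI) by exact PI_RGT_0. apply cos_decreasing_1; lra. }
    assert (T : tau_of w t1 < tau_of w t2).
    { destruct (Rlt_le_dec (tau_of w t1) (tau_of w t2)) as [h|h]; [exact h|exfalso].
      destruct (Rle_lt_or_eq_dec _ _ h) as [h'|h'].
      - pose proof (Smono a b _ _ _ _ Hb Ha C2 h' (conj A1 B1) (conj A2 B2) D1 D2) as S.
        unfold tau_of in S. lra.
      - set (t := tau_of w t1) in *.
        rewrite h' in D2.
        assert (G a b t (w t1) - G a b t (w t2) = (w t1 - w t2)*(t*(w t1 + w t2)+t^2+b)) by (unfold G; ring).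
        assert (w t1 = w t2).
        { assert (0 < t*(w t1 + w t2)+t^2+b) by nra. nra. }
        unfold t, tau_of in h'. lra. }
    unfold z_of. exact (zmono a b _ _ _ _ Hb C1 T A1 A2 D1 D2).
Qed.
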